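(* Let $\mathcal{N}$ be a finite set of players (cognitive/CPC nodes) and let $\mathcal{K}$ be a finite set of primary users. For every coalition $S\subseteq\mathcal{N}$, every $i\in S$ and every $k\in\mathcal{K}$, let $u_{ik}(S)\in\mathbb{R}$ be a number depending only on $i$, $k$ and the set $S$. Fix $0<\kappa\le 1$ and define the payoff $$\phi_i(S)=\sum_{k\in\mathcal{K}}u_{ik}(S)-c(S),\qquad c(S)=\begin{cases}\kappa(|S|-1),& |S|>1,\\ 0,&\text{otherwise},\end{cases}$$ with $\phi(\emptyset)=0$, the coalition value $v(S)=\sum_{j\in S}\phi_j(S)$ (so $v(\emptyset)=0$), and for $i\in S$ $$q_i(S)=\begin{cases}\phi_i(S),&\text{if }\phi_j(S)\ge\phi_j(S\setminus\{i\})\text{ for all }j\in S\setminus\{i\},\\ -\infty,&\text{otherwise.}\end{cases}$$ For coalitions $S_1,S_2$ both containing $i$, write $S_1\succ_i S_2$ iff $q_i(S_1)>q_i(S_2)$ and $v(S_1)+v(S_2\setminus\{i\})>v(S_1\setminus\{i\})+v(S_2)$. Given a partition $\Pi$ of $\mathcal{N}$, a join operation consists of a player $i$ in its coalition $S_m\in\Pi$ and a set $S_k\in\Pi\cup\{\emptyset\}$, $S_k\neq S_m$, with $S_k\cup\{i\}\succ_i S_m$; it replaces $\Pi$ by $\Pi'=(\Pi\setminus\{S_m,S_k\})\cup\{S_m\setminus\{i\},S_k\cup\{i\}\}$ (discarding empty sets). Then, starting from any initial partition $\Pi_{\mathrm{init}}$ of $\mathcal{N}$, every sequence of partitions $\Pi_0=\Pi_{\mathrm{init}}\to\Pi_1\to\Pi_2\to\cdots$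 in which each $\Pi_{l}$ is obtained from $\Pi_{l-1}$ by a join operation is finite; i.e., the sequential join-operation process always converges to a final partition $\Pi_{\mathrm{final}}$ of $\mathcal{N}$ into disjoint coalitions, irrespective of $\Pi_{\mathrm{init}}$.
   Context: In the paper, $u_{ik}(S)$ is the negative Kullback–Leibler distance between two cooperative (Dirichlet-process-based) estimates, computed by node $i$ within coalition $S$, of the distribution of primary user $k$'s activity; the only property used in the statement is that it is a real number determined by $i$, $k$ and $S$ (the game is hedonic: payoffs depend only on the members of one's own coalition). Join operations are performed one at a time in an arbitrary sequential order. *)

(* Defs.v *)
From HB Require Import structures.
From mathcomp Require Import all_boot all_order all_algebra.
From mathcomp Require Import constructive_ereal.
Set Implicit Arguments. Unset Strict Implicit. Unset Printing Implicit Defensive.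
Import Order.TTheory GRing.Theory Num.Theory.
Local Open Scope ring_scope.

Section Coalition.
Variables (N K : finType) (R : realFieldType).
(* u i k S : the utility u_{ik}(S) (only values with i \in S are used) *)
Variable u : N -> K -> {set N} -> R.
Variable kappa : R.

Definition cost (S : {set N}) : R :=
  if (1 < #|S|)%N then kappa * (#|S|%:R - 1) else 0.

Definition phi (i : N) (S : {set N}) : R := \sum_(k : K) u i k S - cost S.

Definition val (S : {set N}) : R := \sum_(j in S) phi j S.

Definition q (i : N) (S : {set N}) : \bar R :=
  if [forall j in S :\ i, phi j (S :\ i) <= phi j S] then (phi i S)%:E
  else -oo%E.

Definition pref (i : N) (S1 S2 : {set N}) : Prop :=
  (q i S2 < q i S1)%E /\ val (S1 :\ i) + val S2 < val S1 + val (S2 :\ i).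

Definition join_step (P P' : {set {set N}}) : Prop :=
  exists (i : N) (Sm Sk : {set N}),
    [/\ Sm \in P, i \in Sm, (Sk \in P \/ Sk = set0) & Sk != Sm] /\
    pref i (i |: Sk) Sm /\
        P' = ((P :\ Sm :\ Sk) :|: [set Sm :\ i; i |: Sk]) :\ set0.
End Coalition.

(* Main.v *)
Require Import Defs.
From HB Require Import structures.
From mathcomp Require Import all_boot all_order all_algebra.
From mathcomp Require Import constructive_ereal.
Import Order.TTheory GRing.Theory Num.Theory.
Local Open Scope ring_scope.

Section Pf.
Variables (N K : finType) (R : realFieldType).
Variable u : N -> K -> {set N} -> R.
Variable kappa : R.

Definition Inv (P : {set {set N}}) : Prop :=
  (forall A B x, A \in P -> B \in P -> A != B -> x \in A -> x \in B -> False)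
  /\ set0 \notin P.

Definition F (P : {set {set N}}) : R := \sum_(S in P) Defs.val u kappa S.

Lemma val0 : Defs.val u kappa set0 = 0.
Proof. by rewrite /Defs.val big_set0. Qed.

Lemma sumD0 (A : {set {set N}}) :
  \sum_(S in A :\ set0) Defs.val u kappa S = \sum_(S in A) Defs.val u kappa S.
Proof.
case: (boolP (set0 \in A)) => h.
  by rewrite [RHS](big_setD1 set0) //= val0 add0r.
apply: eq_bigl => S; rewrite in_setD1.
by case: eqP => // ->; rewrite (negbTE h).
Qed.

Lemma step P P' : Inv P -> join_step u kappa P P' -> Inv P' /\ F P < F P'.
Proof.
move=> [Hd H0] [i [Sm [Sk [[SmP iSm SkP ne] [[_ Hv] ->]]]]].
have iSk : i \notin Sk.
  case: SkP => [SkP|->]; last by rewrite inE.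
  by apply/negP => iSk; apply: (Hd Sk Sm i).
have SkSm : forall x, x \in Sk -> x \in Sm -> False.
  by move=> x; case: SkP => [SkP|->]; [apply: Hd | rewrite inE].
set D := P :\ Sm :\ Sk.
have XD : Sm :\ i \notin D.
  apply/negP; rewrite /D !in_setD1 => /and3P [_ h1 h2].
  have: Sm :\ i == set0.
    apply/eqP/setP => x; rewrite in_set0; apply/negbTE/negP => hx.
    by apply: (Hd _ _ x h2 SmP h1 hx); move: hx; rewrite in_setD1 => /andP[].
  by move/eqP=> e; move: H0; rewrite -e h2.
have YD : i |: Sk \notin D.
  apply/negP; rewrite /D !in_setD1 => /and3P [_ h1 h2].
  by apply: (Hd _ _ i h2 SmP h1 _ iSm); rewrite setU11.
have XY : Sm :\ i != i |: Sk.
  by apply/negP => /eqP e; move: (setU11 i Sk); rewrite -e in_setD1 eqxx.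
have eQ : (D :|: [set Sm :\ i; i |: Sk]) = Sm :\ i |: (i |: Sk |: D).
  by rewrite setUC -setUA setUC -setUA [D :|: _]setUC.
split.
  split; last by rewrite !inE eqxx.
  move=> A B x; rewrite !in_setD1 eQ !in_setU1 /D !in_setD1.
  move=> /andP[_ hA] /andP[_ hB] AB xA xB.
  have sub1 : forall C, C \in P -> C != Sm -> x \in C -> x \in Sm :\ i -> False.
    move=> C CP CSm xC; rewrite in_setD1 => /andP[_ xSm].
    exact: (Hd _ _ x CP SmP CSm xC xSm).
  have sub2 : forall C, C \in P -> C != Sm -> C != Sk -> x \in C -> x \in i |: Sk -> False.
    move=> C CP CSm CSk xC; rewrite in_setU1 => /orP [/eqP ex|xSk].
      by subst x; apply: (Hd _ _ i CP SmP CSm xC iSm).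
    case: SkP => [SkP|e]; last by move: xSk; rewrite e inE.
    exact: (Hd _ _ x CP SkP CSk xC xSk).
  case/or3P: hA => [/eqP eA|/eqP eA|/and3P[A1 A2 AP]];
  case/or3P: hB => [/eqP eB|/eqP eB|/and3P[B1 B2 BP]]; subst.
  - by rewrite eqxx in AB.
  - apply: (SkSm x); first by move: xB; rewrite in_setU1 => /orP[/eqP ex|//];
      subst x; move: xA; rewrite in_setD1 eqxx.
    by move: xA; rewrite in_setD1 => /andP[].
  - exact: (sub1 B).
  - apply: (SkSm x); first by move: xA; rewrite in_setU1 => /orP[/eqP ex|//];
      subst x; move: xB; rewrite in_setD1 eqxx.
    by move: xB; rewrite in_setD1 => /andP[].
  - by rewrite eqxx in AB.
  - exact: (sub2 B).
  - exact: (sub1 A).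
  - exact: (sub2 A).
  - exact: (Hd A B x).
have FP : F P = Defs.val u kappa Sm + Defs.val u kappa Sk + \sum_(S in D) Defs.val u kappa S.
  rewrite /F (big_setD1 Sm) //= -addrA; congr (_ + _).
  case: SkP => [SkP|e].
    by rewrite (big_setD1 Sk) //= in_setD1 ne.
  by rewrite e val0 add0r /D e sumD0.
rewrite FP /F sumD0 eQ big_setU1 /=; last by rewrite in_setU1 negb_or XY.
rewrite big_setU1 //=.
move: Hv; rewrite (setU1K iSk) => Hv.
rewrite addrA ltrD2r.
by rewrite (addrC (Defs.val u kappa Sm)) (addrC (Defs.val u kappa (Sm :\ i))).
Qed.

End Pf.
Arguments Inv {N}.
Arguments F {N K R}.
Arguments step {N K R u kappa P P'}.

Theorem theorem1 (N K : finType) (R : realFieldType)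
  (u : N -> K -> {set N} -> R) (kappa : R)
  (hk0 : 0 < kappa) (hk1 : kappa <= 1)
  (Pi : nat -> {set {set N}}) (hinit : partition (Pi 0%N) [set: N]) :
  ~ (forall l : nat, join_step u kappa (Pi l) (Pi l.+1)).
Proof.
move=> H.
have I0 : Inv (Pi 0%N).
  move: hinit => /and3P [_ /trivIsetP T h0]; split => // A B x AP BP AB xA xB.
  by move: (disjointFr (T A B AP BP AB) xA); rewrite xB.
have Inv_all : forall l, Inv (Pi l).
  by elim => // l IH; case: (step IH (H l)).
have inc : forall l, F u kappa (Pi l) < F u kappa (Pi l.+1).
  by move=> l; case: (step (Inv_all l) (H l)).
have mono : forall l m, (l < m)%N -> F u kappa (Pi l) < F u kappa (Pi m).
  move=> l; elim => // m IH; rewrite ltnS leq_eqVlt => /orP [/eqP ->|lm].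
    exact: inc.
  exact: lt_trans (IH lm) (inc m).
pose n := #|{: {set {set N}}}|.+1.
have inj : injective (fun j : 'I_n => Pi j).
  move=> a b e; apply/val_inj/eqP; apply/negP => /negP neq.
  case: (ltngtP a b) neq => // ab _.
    by move: (mono _ _ ab); rewrite e ltxx.
  by move: (mono _ _ ab); rewrite e ltxx.
by move: (leq_card _ inj); rewrite card_ord /n ltnn.
Qed.
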